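(* Let $\Omega$ be a semigroup and $(\mathcal{A},\{\eta^1,\eta^2,\dots\})$ a $Dend_\infty$-family algebra relative to $\Omega$. Then $(\mathcal{A},\{\mu^1,\mu^2,\dots\})$ is an $A_\infty$-algebra relative to $\Omega$, where $\mu^k:=\eta^{k,[1]}+\cdots+\eta^{k,[k]}$ (i.e. $\mu^k_{\alpha_1,\dots,\alpha_k}=\sum_{r=1}^k\eta^{k,[r]}_{\alpha_1,\dots,\alpha_k}$) for all $k\ge1$.
   Context: $\mathbf{k}$ is a commutative unital ring of characteristic $0$; $\Omega$ a semigroup; $\mathcal{A}=\oplus_{i\in\mathbb{Z}}\mathcal{A}^i$ a graded $\mathbf{k}$-module. $C_k=\{[1],\dots,[k]\}$ formal symbols. For $m,n\ge1$, $1\le i\le m$, $1\le r\le m+n-1$: $R_0[r]$ is $[r]$ if $r\le i-1$, $[i]$ if $i\le r\le i+n-1$, $[r-n+1]$ if $r\ge i+n$; $R_i[r]$ is $[r-i+1]$ if $i\le r\le i+n-1$ and the formal sum $[1]+\cdots+[n]$ otherwise; $\eta^{n,[1]+\cdots+[n]}:=\sum_{s}\eta^{n,[s]}$. Sign $\pm:=(-1)^{i(n+1)+n(|a_1|+\cdots+|a_{i-1}|)}$. A $Dend_\infty$-family algebra: for each $k\ge1$, a $k$-tuple $\eta^k=(\eta^{k,[1]},\dots,\eta^{k,[k]})$, each $\eta^{k,[r]}=\{\eta^{k,[r]}_{\alpha_1,\dots,\alpha_k}:\mathcal{A}^{\otimes k}\to\mathcal{A}\}_{\alpha_j\in\Omega}$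 multilinear of degree $k-2$, with $\eta^{k,[r]}_{\alpha_1,\dots,\alpha_k}$ independent of $\alpha_r$, satisfying for all $N\ge1$, $[r]\in C_N$: $\sum_{m+n=N+1}\sum_{i=1}^m\pm\,\eta^{m,R_0[r]}_{\alpha_1,\dots,\alpha_i\cdots\alpha_{i+n-1},\dots,\alpha_N}\big(a_1,\dots,a_{i-1},\eta^{n,R_i[r]}_{\alpha_i,\dots,\alpha_{i+n-1}}(a_i,\dots,a_{i+n-1}),a_{i+n},\dots,a_N\big)=0$. An $A_\infty$-algebra relative to $\Omega$: collections $\mu^k=\{\mu^k_{\alpha_1,\dots,\alpha_k}:\mathcal{A}^{\otimes k}\to\mathcal{A}\}_{\alpha_j\in\Omega}$ of multilinear maps of degree $k-2$, $k\ge1$, with $\sum_{m+n=N+1}\sum_{i=1}^m\pm\,\mu^m_{\alpha_1,\dots,\alpha_i\cdots\alpha_{i+n-1},\dots,\alpha_N}\big(a_1,\dots,a_{i-1},\mu^n_{\alpha_i,\dots,\alpha_{i+n-1}}(a_i,\dots,a_{i+n-1}),a_{i+n},\dots,a_N\big)=0$ for all $N\ge1$, homogeneous $a_j$ and $\alpha_j\in\Omega$ (in the outer label the block $\alpha_i,\dots,\alpha_{i+n-1}$ is replaced by its product). *)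

(* Defs.v *)
From HB Require Import structures.
From mathcomp Require Import all_boot all_order all_algebra.
Set Implicit Arguments. Unset Strict Implicit. Unset Printing Implicit Defensive.
Import Order.TTheory GRing.Theory Num.Theory.
Local Open Scope ring_scope.

(* Conventions:
   - a k-multilinear map (collection over Omega) is modelled as
     [f : seq Om -> seq A -> A], used on label/argument lists of length k;
   - indices r, i are 1-based as in the paper;
   - the grading of A is a family [G : int -> pred A] of submodules
     giving a direct-sum decomposition A = (+)_i G i. *)

Section Defs.
Variables (K : comNzRingType) (A : lmodType K).

Definition char0 : Prop := forall n : nat, (n%:R : K) = 0 -> n = 0%N.

Definition graded (G : int -> pred A) : Prop :=
  [/\ (forall i, 0 \in G i /\
         forall (c : K) (u v : A), u \in G i -> v \in G i -> c *: u + v \in G i),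
      (forall a : A, exists (s : seq int) (f : int -> A),
           [/\ uniq s, (forall i, f i \in G i) & a = \sum_(i <- s) f i]) &
      (forall (s : seq int) (f : int -> A), uniq s -> (forall i, f i \in G i) ->
           \sum_(i <- s) f i = 0 -> forall i, i \in s -> f i = 0)].

Definition homog_args (G : int -> pred A) (N : nat) (xs : seq A) (ds : seq int) :=
  [/\ size xs = N, size ds = N &
      forall j, (j < N)%N -> nth 0 xs j \in G (nth 0 ds j)].

Variable Om : Type.

Definition multilinear (k : nat) (f : seq Om -> seq A -> A) : Prop :=
  forall (al : seq Om) (l r : seq A) (c : K) (x y : A),
    size al = k -> (size l + size r + 1)%N = k ->
    f al (l ++ (c *: x + y) :: r) = c *: f al (l ++ x :: r) + f al (l ++ y :: r).

Definition has_degree (G : int -> pred A) (k : nat) (e : int)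
    (f : seq Om -> seq A -> A) : Prop :=
  forall (al : seq Om) (xs : seq A) (ds : seq int),
    size al = k -> homog_args G k xs ds -> f al xs \in G (\sum_(d <- ds) d + e).

(* the label list alpha_1..alpha_N with the block of length n starting at
   position j+1 (0-based j) replaced by its semigroup product *)
Definition contract (op : Om -> Om -> Om) (al : seq Om) (j n : nat) : seq Om :=
  take j al ++ match drop j al with
               | x :: rest => foldl op x (take n.-1 rest) :: drop n.-1 rest
               | [::] => [::]
               end.

(* the argument list a_1..a_{i-1}, b, a_{i+n}..a_N   (j = i-1) *)
Definition insert_block (xs : seq A) (j n : nat) (b : A) : seq A :=
  take j xs ++ b :: drop (j + n) xs.

Definition ainf_sign (i n : nat) (ds : seq int) : K :=
  (-1) ^+ absz ((i * (n + 1))%:Z + n%:Z * \sum_(d <- take i.-1 ds) d).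

Definition ainf_identity (G : int -> pred A) (op : Om -> Om -> Om)
    (mu : nat -> seq Om -> seq A -> A) : Prop :=
  forall (N : nat) (al : seq Om) (xs : seq A) (ds : seq int),
    (1 <= N)%N -> size al = N -> homog_args G N xs ds ->
    \sum_(1 <= m < N.+1) \sum_(1 <= i < m.+1)
      ainf_sign i (N.+1 - m)%N ds *:
        mu m (contract op al i.-1 (N.+1 - m)%N)
           (insert_block xs i.-1 (N.+1 - m)%N
              (mu (N.+1 - m)%N (take (N.+1 - m)%N (drop i.-1 al))
                             (take (N.+1 - m)%N (drop i.-1 xs)))) = 0.

Definition is_Ainf_algebra (G : int -> pred A) (op : Om -> Om -> Om)
    (mu : nat -> seq Om -> seq A -> A) : Prop :=
  [/\ forall k, (1 <= k)%N -> multilinear k (mu k),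
      forall k, (1 <= k)%N -> has_degree G k (k%:Z - 2) (mu k) &
      ainf_identity G op mu].

Definition R0 (i n r : nat) : nat :=
  if (r < i)%N then r else if (r <= i + n - 1)%N then i else (r - n + 1)%N.

Definition eta_Ri (eta : nat -> nat -> seq Om -> seq A -> A) (n i r : nat)
    (bl : seq Om) (ys : seq A) : A :=
  if (i <= r <= i + n - 1)%N then eta n (r - i + 1)%N bl ys
  else \sum_(1 <= s < n.+1) eta n s bl ys.

Definition dend_identity (G : int -> pred A) (op : Om -> Om -> Om)
    (eta : nat -> nat -> seq Om -> seq A -> A) : Prop :=
  forall (N r : nat) (al : seq Om) (xs : seq A) (ds : seq int),
    (1 <= r <= N)%N -> size al = N -> homog_args G N xs ds ->
    \sum_(1 <= m < N.+1) \sum_(1 <= i < m.+1)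
      ainf_sign i (N.+1 - m)%N ds *:
        eta m (R0 i (N.+1 - m)%N r) (contract op al i.-1 (N.+1 - m)%N)
           (insert_block xs i.-1 (N.+1 - m)%N
              (eta_Ri eta (N.+1 - m)%N i r (take (N.+1 - m)%N (drop i.-1 al))
                                        (take (N.+1 - m)%N (drop i.-1 xs)))) = 0.

Definition indep_label (k r : nat) (f : seq Om -> seq A -> A) : Prop :=
  forall (l rt : seq Om) (x y : Om) (xs : seq A),
    size l = r.-1 -> (size l + size rt + 1)%N = k ->
    f (l ++ x :: rt) xs = f (l ++ y :: rt) xs.

Definition is_Dend_family_algebra (G : int -> pred A) (op : Om -> Om -> Om)
    (eta : nat -> nat -> seq Om -> seq A -> A) : Prop :=
  [/\ forall k r, (1 <= r <= k)%N -> multilinear k (eta k r),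
      forall k r, (1 <= r <= k)%N -> has_degree G k (k%:Z - 2) (eta k r),
      forall k r, (1 <= r <= k)%N -> indep_label k r (eta k r) &
      dend_identity G op eta].

Definition mu_of_eta (eta : nat -> nat -> seq Om -> seq A -> A) (k : nat)
    (al : seq Om) (xs : seq A) : A :=
  \sum_(1 <= r < k.+1) eta k r al xs.

End Defs.

(* Main.v *)
Require Import Defs.
From HB Require Import structures.
From mathcomp Require Import all_boot all_order all_algebra.
From mathcomp Require Import zify.
Import Order.TTheory GRing.Theory Num.Theory.
Local Open Scope ring_scope.

Lemma shift_sum (V : nmodType) (a b : nat) (F : nat -> V) :
  \sum_(a <= k < b) F k = \sum_(0 <= k < b - a) F (k + a)%N.
Proof. by rewrite -{1}(add0n a) big_addn. Qed.

Lemma key (K : comNzRingType) (A : lmodType K) (m n i : nat)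
  (F : nat -> A -> A) (g : nat -> A) :
  (1 <= i <= m)%N -> (1 <= n)%N ->
  (forall b c, F i (b + c) = F i b + F i c) -> F i 0 = 0 ->
  \sum_(1 <= r < (m + n - 1)%N.+1) F (R0 i n r)
     (if (i <= r <= i + n - 1)%N then g (r - i + 1)%N else \sum_(1 <= s < n.+1) g s)
  = \sum_(1 <= r < m.+1) F r (\sum_(1 <= s < n.+1) g s).
Proof.
move=> /andP[i1 im] n1 Fadd F0.
rewrite (@big_cat_nat _ _ _ i) //=; last by lia.
rewrite [X in _ + X = _](@big_cat_nat _ _ _ (i + n)) //=; try lia.
rewrite [RHS](@big_cat_nat _ _ _ i) //=; last by lia.
rewrite [X in _ = _ + X](@big_cat_nat _ _ _ i.+1) //= big_nat1.
f_equal; [|f_equal].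
- apply: eq_big_nat => r /andP[r1 ri].
  rewrite /R0 ri; case: ifP => //; lia.
- transitivity (\sum_(i <= r < i + n) F i (g (r - i + 1)%N)).
    apply: eq_big_nat => r /andP[r1 ri].
    rewrite /R0 ltnNge r1 /=; have -> : (r <= i + n - 1)%N by lia.
    by [].
  rewrite -(big_morph (F i) Fadd F0); congr (F i _).
  rewrite shift_sum [RHS]shift_sum; have -> : (i + n - i = n.+1 - 1)%N by lia.
  by apply: eq_big_nat => k _; congr g; lia.
- rewrite shift_sum [RHS]shift_sum; have -> : ((m + n - 1).+1 - (i + n) = m.+1 - i.+1)%N by lia.
  apply: eq_big_nat => k _.
  rewrite /R0; have -> : (k + (i + n) < i)%N = false by lia.
  have -> : (k + (i + n) <= i + n - 1)%N = false by lia.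
  rewrite andbF.
  congr F; lia.
Qed.

Lemma size_contract (Om : Type) (op : Om -> Om -> Om) (al : seq Om) (j n : nat) :
  (1 <= n)%N -> (j + n <= size al)%N ->
  size (contract op al j n) = (size al - n + 1)%N.
Proof.
move=> n1 jn; rewrite /contract size_cat size_takel; last by lia.
have := size_drop j al.
case: (drop j al) => [|x rest] /=; first by lia.
move=> hs; rewrite size_drop.
lia.
Qed.

Theorem proposition5p10 (K : comNzRingType) (A : lmodType K) (G : int -> pred A)
    (Om : Type) (op : Om -> Om -> Om)
    (eta : nat -> nat -> seq Om -> seq A -> A) :
  char0 K -> graded G -> associative op ->
  is_Dend_family_algebra G op eta ->
  is_Ainf_algebra G op (mu_of_eta eta).
Proof.
move=> _ [Gsub _ _] _ [ml dg il di]; split.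
- move=> k k1 al l r c x y sal slr; rewrite /mu_of_eta scaler_sumr -big_split.
  apply: eq_big_nat => s /andP[s1 sk]; apply: ml => //; by rewrite s1.
- move=> k k1 al xs ds sal hx; rewrite /mu_of_eta big_nat_cond.
  apply: (big_ind (fun z => z \in G _)).
  + by case: (Gsub (\sum_(d <- ds) d + (k%:Z - 2))).
  + move=> u v hu hv; rewrite -(scale1r u).
    by case: (Gsub (\sum_(d <- ds) d + (k%:Z - 2))) => _; apply.
  + move=> s /andP[/andP[s1 sk] _]; apply: dg => //; by rewrite s1.
move=> N al xs ds N1 sal hx.
have sxs : size xs = N by case: hx.
transitivity (\sum_(1 <= m < N.+1) \sum_(1 <= i < m.+1) \sum_(1 <= r < N.+1)
      ainf_sign K i (N.+1 - m)%N ds *: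
        eta m (R0 i (N.+1 - m)%N r) (contract op al i.-1 (N.+1 - m)%N)
           (insert_block xs i.-1 (N.+1 - m)%N
              (eta_Ri eta (N.+1 - m)%N i r (take (N.+1 - m)%N (drop i.-1 al))
                                        (take (N.+1 - m)%N (drop i.-1 xs))))).
  apply: eq_big_nat => m /andP[m1 mN]; apply: eq_big_nat => i /andP[i1 im].
  set n := (N.+1 - m)%N.
  set C := contract op al i.-1 n.
  set bl := take n (drop i.-1 al); set ys := take n (drop i.-1 xs).
  pose F r b := ainf_sign K i n ds *: eta m r C (insert_block xs i.-1 n b).
  pose g s := eta n s bl ys.
  have sC : size C = m by rewrite /C size_contract; lia.
  have Fadd : forall b c, F i (b + c) = F i b + F i c.
    move=> b c; rewrite /F /insert_block -scalerDr; congr (_ *: _).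
    have := ml m i _ C (take i.-1 xs) (drop (i.-1 + n) xs) 1 b c; rewrite !scale1r; apply => //.
    + by rewrite i1 -ltnS.
    + rewrite size_takel ?size_drop; lia.
  have F0 : F i 0 = 0.
    have := Fadd 0 0; rewrite addr0 => /(congr1 (fun z => z - F i 0)).
    by rewrite subrr addrK => <-.
  have hi : (1 <= i <= m)%N by lia.
  have hn : (1 <= n)%N by rewrite /n; lia.
  have E := @key K A m n i F g hi hn Fadd F0.
  have hN : (m + n - 1 = N)%N by rewrite /n; lia.
  rewrite hN in E.
  rewrite /eta_Ri -/n -/bl -/ys; rewrite /F /g in E; rewrite E.
  by rewrite /mu_of_eta scaler_sumr.
under eq_big_nat => m _ do rewrite exchange_big_nat.
rewrite exchange_big_nat big_nat_cond big1 // => r /andP[/andP[r1 rN] _].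
apply: di => //; by rewrite r1.
Qed.
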